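(* Let $A,B$ be mutually avoiding point sets with $A\cup B$ in general position, let $x_1\prec x_2\prec\cdots\prec x_n$ be points of $A$ and $y_1\prec y_2\prec\cdots\prec y_n$ be points of $B$. Then the straight-line drawing of the ladder graph formed by the paths $x_1x_2\cdots x_n$ and $y_1y_2\cdots y_n$ and the edges $x_iy_i$, $i\in[n]$, is non-crossing.
   Context: Two finite point sets $A,B\subset\mathbb{R}^2$ are mutually avoiding if $|A|,|B|\ge2$, no line through two points of $A$ intersects the convex hull of $B$, and no line through two points of $B$ intersects the convex hull of $A$. For such a pair there are unique total orders $\prec$ on $A$ and on $B$ such that every point of $B$ sees the points of $A$ consecutively in clockwise order according to $\prec$, and every point of $A$ sees the points of $B$ consecutively in counterclockwise order according to $\prec$. Non-crossing means no two edge segments share a point other than a common endpoint. *)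

(* Defs.v *)
From HB Require Import structures.
From mathcomp Require Import all_boot all_order all_algebra.
Set Implicit Arguments. Unset Strict Implicit. Unset Printing Implicit Defensive.
Import Order.TTheory GRing.Theory Num.Theory.
Local Open Scope ring_scope.

Section Geo.
Variable R : realFieldType.
Definition pt := (R * R)%type.

(* orientation determinant: > 0 iff p,q,r counterclockwise, < 0 iff clockwise *)
Definition orient (p q r : pt) : R :=
  (q.1 - p.1) * (r.2 - p.2) - (q.2 - p.2) * (r.1 - p.1).

Definition on_line (p q z : pt) : Prop := orient p q z = 0.

Definition in_hull (s : seq pt) (z : pt) : Prop :=
  exists w : pt -> R,
    (forall p, 0 <= w p) /\
    \sum_(p <- undup s) w p = 1 /\
    z = (\sum_(p <- undup s) w p * p.1, \sum_(p <- undup s) w p * p.2).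

Definition lines_avoid_hull (A B : seq pt) : Prop :=
  forall a1 a2, a1 \in A -> a2 \in A -> a1 != a2 ->
  forall z, on_line a1 a2 z -> ~ in_hull B z.

Definition mutually_avoiding (A B : seq pt) : Prop :=
  (2 <= size (undup A))%N /\ (2 <= size (undup B))%N /\
  lines_avoid_hull A B /\ lines_avoid_hull B A.

Definition general_position (S : seq pt) : Prop :=
  forall p q r, p \in S -> q \in S -> r \in S ->
  p != q -> q != r -> p != r -> orient p q r != 0.

Definition strict_total_order_on (A : seq pt) (prec : pt -> pt -> bool) : Prop :=
  (forall a, a \in A -> ~~ prec a a) /\
  (forall a b c, a \in A -> b \in A -> c \in A -> prec a b -> prec b c -> prec a c) /\
  (forall a b, a \in A -> b \in A -> a != b -> prec a b || prec b a).

Definition sees_cw (b : pt) (A : seq pt) (prec : pt -> pt -> bool) : Prop :=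
  forall a a', a \in A -> a' \in A -> prec a a' -> orient b a a' < 0.

Definition sees_ccw (a : pt) (B : seq pt) (prec : pt -> pt -> bool) : Prop :=
  forall b b', b \in B -> b' \in B -> prec b b' -> 0 < orient a b b'.

Definition avoiding_orders (A B : seq pt) (precA precB : pt -> pt -> bool) : Prop :=
  strict_total_order_on A precA /\ strict_total_order_on B precB /\
  (forall b, b \in B -> sees_cw b A precA) /\
  (forall a, a \in A -> sees_ccw a B precB).

Definition in_seg (p q z : pt) : Prop :=
  exists t : R, 0 <= t /\ t <= 1 /\
    z = ((1 - t) * p.1 + t * q.1, (1 - t) * p.2 + t * q.2).

Definition non_crossing (E : seq (pt * pt)) : Prop :=
  forall e f, e \in E -> f \in E ->
    (e != f /\ e != (f.2, f.1)) ->
    forall z, in_seg e.1 e.2 z -> in_seg f.1 f.2 z ->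
      (z \in [:: e.1; e.2]) && (z \in [:: f.1; f.2]).

Definition ladder_edges (n : nat) (x y : nat -> pt) : seq (pt * pt) :=
  [seq (x i, x i.+1) | i <- iota 0 n.-1] ++
  [seq (y i, y i.+1) | i <- iota 0 n.-1] ++
  [seq (x i, y i) | i <- iota 0 n].
End Geo.

(* Main.v *)
Require Import Defs.
From HB Require Import structures.
From mathcomp Require Import all_boot all_order all_algebra.
From mathcomp Require Import ring lra zify.
Import Order.TTheory GRing.Theory Num.Theory.
Set Implicit Arguments. Unset Strict Implicit.
Local Open Scope ring_scope.

Section G.
Variable R : realFieldType.
Implicit Types p q c d z : pt R.

Lemma orC p q r : orient p q r = orient q r p.
Proof. rewrite /orient; ring. Qed.
Lemma orN p q r : orient p q r = - orient q p r.
Proof. rewrite /orient; ring. Qed.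
Lemma orN2 p q r : orient p q r = - orient p r q.
Proof. rewrite /orient; ring. Qed.
Lemma or_pp p r : orient p r p = 0.
Proof. rewrite /orient; ring. Qed.
Lemma or_qq p r : orient p r r = 0.
Proof. rewrite /orient; ring. Qed.

Lemma seg_aff c d p q z : in_seg p q z -> exists t, 0 <= t /\ t <= 1 /\
  z = ((1 - t) * p.1 + t * q.1, (1 - t) * p.2 + t * q.2) /\
  orient c d z = (1 - t) * orient c d p + t * orient c d q.
Proof.
move=> [t [t0 [t1 ->]]]; exists t; do 3 split => //.
rewrite /orient /=; ring.
Qed.

Lemma seg_sym p q z : in_seg p q z -> in_seg q p z.
Proof.
move=> [t [t0 [t1 ->]]]; exists (1 - t); split; first lra; split; first lra.
congr (_, _); ring.
Qed.

Lemma seg_line p q z : in_seg p q z -> orient p q z = 0.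
Proof.
move=> /(@seg_aff p q _ _ _) [t [_ [_ [_ ->]]]]; rewrite or_pp or_qq; ring.
Qed.

Lemma side_pos c d p q z : in_seg p q z -> 0 < orient c d p -> 0 < orient c d q ->
  0 < orient c d z.
Proof. move=> /(@seg_aff c d _ _ _) [t [t0 [t1 [_ ->]]]] a b; nra. Qed.
Lemma side_neg c d p q z : in_seg p q z -> orient c d p < 0 -> orient c d q < 0 ->
  orient c d z < 0.
Proof. move=> /(@seg_aff c d _ _ _) [t [t0 [t1 [_ ->]]]] a b; nra. Qed.
Lemma side_ge0 c d p q z : in_seg p q z -> 0 <= orient c d p -> 0 <= orient c d q ->
  0 <= orient c d z.
Proof. move=> /(@seg_aff c d _ _ _) [t [t0 [t1 [_ ->]]]] a b; nra. Qed.
Lemma side_le0 c d p q z : in_seg p q z -> orient c d p <= 0 -> orient c d q <= 0 ->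
  orient c d z <= 0.
Proof. move=> /(@seg_aff c d _ _ _) [t [t0 [t1 [_ ->]]]] a b; nra. Qed.
Lemma touch c d p q z : in_seg p q z -> orient c d p = 0 -> orient c d q != 0 ->
  orient c d z = 0 -> z = p.
Proof.
move=> /(@seg_aff c d _ _ _) [t [t0 [t1 [-> ->]]]] -> nq.
rewrite mulr0 add0r => /eqP; rewrite mulf_eq0 (negbTE nq) orbF => /eqP ->.
rewrite subr0 !mul1r !mul0r !addr0; by case: p.
Qed.
End G.
Arguments side_pos {R c d p q z}.
Arguments side_neg {R c d p q z}.
Arguments side_ge0 {R c d p q z}.
Arguments side_le0 {R c d p q z}.
Arguments touch {R c d p q z}.
Arguments seg_sym {R p q z}.
Arguments seg_line {R p q z}.


Lemma ex_mem (T : eqType) (s : seq T) : (2 <= size (undup s))%N -> exists a, a \in s.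
Proof. by case: s => // a s _; exists a; rewrite inE eqxx. Qed.

Unset Implicit Arguments. Set Strict Implicit.
Theorem mainTheorem9 (R : realFieldType) (A B : seq (pt R))
  (precA precB : pt R -> pt R -> bool) (n : nat) (x y : nat -> pt R) :
  mutually_avoiding A B ->
  general_position (A ++ B) ->
  avoiding_orders A B precA precB ->
  (forall i, (i < n)%N -> x i \in A) ->
  (forall i, (i < n)%N -> y i \in B) ->
  (forall i, (i.+1 < n)%N -> precA (x i) (x i.+1)) ->
  (forall i, (i.+1 < n)%N -> precB (y i) (y i.+1)) ->
  non_crossing (ladder_edges n x y).
Proof.
move=> [szA [szB _]] _ [[irrA [trA totA]] [[irrB [trB totB]] [cwB ccwA]]] xA yB sx sy.
have [a0 a0A] := (@ex_mem _ _ szA).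
have [b0 b0B] := (@ex_mem _ _ szB).
have chA : forall i k, (i < k)%N -> (k < n)%N -> precA (x i) (x k).
  move=> i k; elim: k => // k IH; rewrite ltnS leq_eqVlt => /orP[/eqP<- | ik] kn.
    exact: sx.
  apply: (trA _ (x k)); [apply: xA; lia | apply: xA; lia | apply: xA; lia
                        | apply: IH; lia | exact: sx].
have chB : forall i k, (i < k)%N -> (k < n)%N -> precB (y i) (y k).
  move=> i k; elim: k => // k IH; rewrite ltnS leq_eqVlt => /orP[/eqP<- | ik] kn.
    exact: sy.
  apply: (trB _ (y k)); [apply: yB; lia | apply: yB; lia | apply: yB; lia
                        | apply: IH; lia | exact: sy].
have oA : forall b, b \in B -> forall i k, (i < k)%N -> (k < n)%N ->
    orient b (x i) (x k) < 0.
  move=> b bB i k ik kn; apply: (cwB b bB); [apply: xA; lia | apply: xA; lia | exact: chA].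
have oB : forall a, a \in A -> forall i k, (i < k)%N -> (k < n)%N ->
    0 < orient a (y i) (y k).
  move=> a aA i k ik kn; apply: (ccwA a aA); [apply: yB; lia | apply: yB; lia | exact: chB].
have rx : forall i k, (i < k)%N -> (k < n)%N -> 0 < orient (x i) (y i) (x k).
  move=> i k ik kn; rewrite orC orN2 oppr_gt0; apply: oA; try lia.
  by apply: yB; lia.
have rx' : forall i k, (k < i)%N -> (i < n)%N -> orient (x i) (y i) (x k) < 0.
  move=> i k ki kn; rewrite orC; apply: oA; try lia; by apply: yB; lia.
have ry : forall i k, (i < k)%N -> (k < n)%N -> 0 < orient (x i) (y i) (y k).
  move=> i k ik kn; apply: oB; try lia; by apply: xA; lia.
have ry' : forall i k, (k < i)%N -> (i < n)%N -> orient (x i) (y i) (y k) < 0.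
  move=> i k ki kn; rewrite orN2 oppr_lt0; apply: oB; try lia; by apply: xA; lia.
have hAA : forall i j, (i < j)%N -> (j.+1 < n)%N -> forall z,
    in_seg (x i) (x i.+1) z -> in_seg (x j) (x j.+1) z ->
    (z \in [:: x i; x i.+1]) && (z \in [:: x j; x j.+1]).
  move=> i j ij jn z s1 s2.
  have f0 : 0 < orient b0 (x i.+1) (x i) by rewrite orN2 oppr_gt0; apply: oA => //; lia.
  have g1 : 0 <= orient b0 (x i.+1) z.
    by apply: (side_ge0 (seg_sym s1)); [rewrite or_qq | exact: ltW].
  case: (ltngtP j i.+1) => [|jg|je]; first lia.
    have : orient b0 (x i.+1) z < 0 by apply: (side_neg s2); apply: oA => //; lia.
    lra.
  subst j.
  have g2 : orient b0 (x i.+1) z <= 0.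
    by apply: (side_le0 s2); [rewrite or_qq | apply: ltW; apply: oA => //; lia].
  have ze : z = x i.+1.
    by apply: (touch (seg_sym s1)); [exact: or_qq | rewrite gt_eqF | lra].
  by rewrite ze !inE !eqxx ?orbT.
have hBB : forall i j, (i < j)%N -> (j.+1 < n)%N -> forall z,
    in_seg (y i) (y i.+1) z -> in_seg (y j) (y j.+1) z ->
    (z \in [:: y i; y i.+1]) && (z \in [:: y j; y j.+1]).
  move=> i j ij jn z s1 s2.
  have f0 : orient a0 (y i.+1) (y i) < 0 by rewrite orN2 oppr_lt0; apply: oB => //; lia.
  have g1 : orient a0 (y i.+1) z <= 0.
    by apply: (side_le0 (seg_sym s1)); [rewrite or_qq | exact: ltW].
  case: (ltngtP j i.+1) => [|jg|je]; first lia.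
    have : 0 < orient a0 (y i.+1) z by apply: (side_pos s2); apply: oB => //; lia.
    lra.
  subst j.
  have g2 : 0 <= orient a0 (y i.+1) z.
    by apply: (side_ge0 s2); [rewrite or_qq | apply: ltW; apply: oB => //; lia].
  have ze : z = y i.+1.
    by apply: (touch (seg_sym s1)); [exact: or_qq | rewrite lt_eqF | lra].
  by rewrite ze !inE !eqxx ?orbT.
have hAB : forall i j, (i.+1 < n)%N -> (j.+1 < n)%N -> forall z,
    in_seg (x i) (x i.+1) z -> in_seg (y j) (y j.+1) z -> False.
  move=> i j iN jN z s1 s2.
  have := seg_line s1.
  have : orient (x i) (x i.+1) z < 0.
    by apply: (side_neg s2); rewrite -orC; apply: oA => //; apply: yB; lia.
  lra.
have hRR : forall i j, (i < n)%N -> (j < n)%N -> i != j -> forall z,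
    in_seg (x i) (y i) z -> in_seg (x j) (y j) z -> False.
  move=> i j iN jN ij z s1 s2.
  have := seg_line s1.
  case: (ltngtP i j) => [lt|gt|e].
  - have : 0 < orient (x i) (y i) z by apply: (side_pos s2); [apply: rx | apply: ry].
    lra.
  - have : orient (x i) (y i) z < 0 by apply: (side_neg s2); [apply: rx' | apply: ry'].
    lra.
  - by rewrite e eqxx in ij.
have hRA : forall i j, (i < n)%N -> (j.+1 < n)%N -> forall z,
    in_seg (x i) (y i) z -> in_seg (x j) (x j.+1) z ->
    (z \in [:: x i; y i]) && (z \in [:: x j; x j.+1]).
  move=> i j iN jN z s1 s2.
  have h0 := seg_line s1.
  case: (ltngtP i j) => [lt|gt|e].
  - have : 0 < orient (x i) (y i) z by apply: (side_pos s2); apply: rx => //; lia.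
    lra.
  - case: (ltngtP i j.+1) => [|gt'|e']; first lia.
      have : orient (x i) (y i) z < 0 by apply: (side_neg s2); apply: rx' => //; lia.
      lra.
    subst i.
    have ze : z = x j.+1.
      apply: (touch (seg_sym s2) (or_pp _ _) _ h0).
      by apply: ltr0_neq0; apply: rx'.
    by rewrite ze !inE !eqxx ?orbT.
  - subst i.
    have ze : z = x j.
      apply: (touch s2 (or_pp _ _) _ h0).
      by apply: lt0r_neq0; apply: rx.
    by rewrite ze !inE !eqxx ?orbT.
have hRB : forall i j, (i < n)%N -> (j.+1 < n)%N -> forall z,
    in_seg (x i) (y i) z -> in_seg (y j) (y j.+1) z ->
    (z \in [:: x i; y i]) && (z \in [:: y j; y j.+1]).
  move=> i j iN jN z s1 s2.
  have h0 := seg_line s1.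
  case: (ltngtP i j) => [lt|gt|e].
  - have : 0 < orient (x i) (y i) z by apply: (side_pos s2); apply: ry => //; lia.
    lra.
  - case: (ltngtP i j.+1) => [|gt'|e']; first lia.
      have : orient (x i) (y i) z < 0 by apply: (side_neg s2); apply: ry' => //; lia.
      lra.
    subst i.
    have ze : z = y j.+1.
      apply: (touch (seg_sym s2) (or_qq _ _) _ h0).
      by apply: ltr0_neq0; apply: ry'.
    by rewrite ze !inE !eqxx ?orbT.
  - subst i.
    have ze : z = y j.
      apply: (touch s2 (or_qq _ _) _ h0).
      by apply: lt0r_neq0; apply: ry.
    by rewrite ze !inE !eqxx ?orbT.
rewrite /non_crossing /ladder_edges => e0 f0 He Hf [nef _] z; move: nef.
rewrite !mem_cat in He Hf.
case/or3P: He => /mapP[i]; rewrite mem_iota add0n => /andP[_ Hi] ->;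
  case/or3P: Hf => /mapP[j]; rewrite mem_iota add0n => /andP[_ Hj] -> /= nef s1 s2.
- case: (ltngtP i j) => [ij|ji|eij].
  + by apply: hAA => //; lia.
  + by rewrite andbC; apply: hAA => //; lia.
  + by rewrite eij eqxx in nef.
- by case: (hAB i j _ _ z s1 s2); lia.
- by rewrite andbC; apply: hRA => //; lia.
- by case: (hAB j i _ _ z s2 s1); lia.
- case: (ltngtP i j) => [ij|ji|eij].
  + by apply: hBB => //; lia.
  + by rewrite andbC; apply: hBB => //; lia.
  + by rewrite eij eqxx in nef.
- by rewrite andbC; apply: hRB => //; lia.
- by apply: hRA => //; lia.
- by apply: hRB => //; lia.
- case: (eqVneq i j) => [eij|ne]; first by rewrite eij eqxx in nef.
  by case: (hRR i j _ _ ne z s1 s2); lia.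
Qed.
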